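(* Let $n\ge3$ and order the letters $y_1<y_2<\cdots<y_n$. The rewriting system on words in $y_1,\dots,y_n$ with rules $y_iy_j\to y_jy_i$ for $j+2\le i\le n-1$ and $y_ny_k\to y_ky_n$ for $1\le k\le n-3$ (i.e. the presentation of $K^{\infty}_n$ with each relation oriented towards the length-lexicographically smaller side) is complete: every ambiguity is resolvable, so every element of $K^{\infty}_n$ has a unique irreducible representative word.
   Context: $K^{\infty}_n=\langle y_1,\dots,y_n\mid y_iy_j=y_jy_i\ (j+2\le i\le n-1),\ y_ny_k=y_ky_n\ (1\le k\le n-3)\rangle$. A presentation/rewriting system is complete if it is terminating and all (overlap) ambiguities can be resolved to a common word. *)

(* Defs.v *)
(* Words over the alphabet y_1 < ... < y_n are encoded as
   sequences of natural numbers, the letter y_i being the number i. *)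
From mathcomp Require Import all_boot.
From Stdlib Require Import Relations.

Set Implicit Arguments.
Unset Strict Implicit.
Unset Printing Implicit Defensive.

Definition is_word (n : nat) (w : seq nat) : bool :=
  all (fun a => (1 <= a) && (a <= n)) w.

Definition Krule (n : nat) (l r : seq nat) : Prop :=
  (exists i j, [/\ 1 <= j, j + 2 <= i, i <= n - 1,
                   l = [:: i; j] & r = [:: j; i]])
  \/ (exists k, [/\ 1 <= k, k <= n - 3, l = [:: n; k] & r = [:: k; n]]).

Definition Kstep (n : nat) (u v : seq nat) : Prop :=
  exists x y l r, [/\ Krule n l r, u = x ++ l ++ y & v = x ++ r ++ y].

Definition Kstar (n : nat) : relation (seq nat) := clos_refl_trans _ (Kstep n).

(* equivalence closure: equality in the monoid presented by the relations *)
Definition Kconv (n : nat) : relation (seq nat) :=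
  clos_refl_sym_trans _ (Kstep n).

Definition irreducible (n : nat) (w : seq nat) : Prop := forall v, ~ Kstep n w v.

Definition terminating (n : nat) : Prop :=
  forall w, is_word n w -> Acc (fun v u => Kstep n u v) w.

Definition ambiguities_resolvable (n : nat) : Prop :=
  forall w u v, is_word n w -> Kstep n w u -> Kstep n w v ->
    exists z, Kstar n u z /\ Kstar n v z.

Definition complete (n : nat) : Prop :=
  terminating n /\ ambiguities_resolvable n.

(* Main.v *)
Require Import Defs.
From mathcomp Require Import all_boot.
From Stdlib Require Import Relations.
From Stdlib Require Import Classical.
From mathcomp Require Import zify.
Set Implicit Arguments.

Definition Sp (n a b : nat) : Prop :=
  (1 <= b /\ b + 2 <= a /\ a <= n - 1) \/ (a = n /\ 1 <= b /\ b <= n - 3).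

Lemma Sp_trans n a b c : Sp n a b -> Sp n b c -> Sp n a c.
Proof. rewrite /Sp; lia. Qed.

Lemma Sp_lt n a b : Sp n a b -> b < a.
Proof. rewrite /Sp; lia. Qed.

Inductive step (n : nat) : seq nat -> seq nat -> Prop :=
| st_base a b y : Sp n a b -> step n (a :: b :: y) (b :: a :: y)
| st_cons c s t : step n s t -> step n (c :: s) (c :: t).

Lemma Krule_iff n l r :
  Krule n l r <-> exists a b, Sp n a b /\ l = [:: a; b] /\ r = [:: b; a].
Proof.
split.
- case=> [[i [j [h1 h2 h3 -> ->]]] | [k [h1 h2 -> ->]]].
  + exists i, j; split; [left; lia | by []].
  + exists n, k; split; [right; lia | by []].
- move=> [a [b [[hS|hS] [-> ->]]]].
  + left; exists a, b; split=> //; lia.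
  + right; exists b; case: hS => -> hb; split=> //; lia.
Qed.

Lemma Kstep_step n u v : Kstep n u v -> step n u v.
Proof.
case=> x [y [l [r [hr -> ->]]]].
move/Krule_iff: hr => [a [b [hS [-> ->]]]].
elim: x => [|c x IH] /=; by constructor.
Qed.

Lemma step_Kstep n u v : step n u v -> Kstep n u v.
Proof.
elim=> [a b y hS | c s t _ [x [y [l [r [hr -> ->]]]]]].
- exists [::], y, [:: a; b], [:: b; a]; split=> //; apply/Krule_iff; eauto.
- by exists (c :: x), y, l, r; split.
Qed.

Lemma KS_base n a b y : Sp n a b -> Kstar n (a :: b :: y) (b :: a :: y).
Proof. by move=> h; apply: rt_step; apply: step_Kstep; constructor. Qed.

Lemma Kstar_cons n c u v : Kstar n u v -> Kstar n (c :: u) (c :: v).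
Proof.
move=> H; induction H.
- by apply: rt_step; apply: step_Kstep; constructor; apply: Kstep_step.
- exact: rt_refl.
- exact: rt_trans IHclos_refl_trans1 IHclos_refl_trans2.
Qed.

Lemma KS_cons n c u v : step n u v -> Kstar n (c :: u) (c :: v).
Proof. by move=> h; apply: Kstar_cons; apply: rt_step; apply: step_Kstep. Qed.

Lemma lc n w u v : Kstep n w u -> Kstep n w v ->
  exists z, Kstar n u z /\ Kstar n v z.
Proof.
move=> /Kstep_step h1 /Kstep_step h2.
elim: h1 v h2.
- move=> a b y hS v h2. inversion h2; subst.
  + exists (b :: a :: y); split; exact: rt_refl.
  + inversion H2; subst.
    * have hac := Sp_trans hS H3.
      exists [:: b0, b, a & y0]; split.
      -- apply: rt_trans; first by apply: Kstar_cons; apply: KS_base hac.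
         exact: KS_base.
      -- apply: rt_trans; first by apply: KS_base hac.
         by apply: Kstar_cons; apply: KS_base.
    * exists [:: b, a & t0]; split.
      -- by do 2 apply: Kstar_cons; apply: rt_step; apply: step_Kstep.
      -- exact: KS_base.


- move=> c s t hst IH v h2. inversion h2; subst.
  + inversion hst; subst.
    * have hac := Sp_trans H2 H3.
      exists [:: b0, b, c & y0]; split.
      -- apply: rt_trans; first by apply: KS_base hac.
         by apply: Kstar_cons; apply: KS_base.
      -- apply: rt_trans; first by apply: Kstar_cons; apply: KS_base hac.
         exact: KS_base.
    * exists [:: b, c & t0]; split.
      -- exact: KS_base.
      -- by do 2 apply: Kstar_cons; apply: rt_step; apply: step_Kstep.
  + have [z [hz1 hz2]] := IH _ H2.
    by exists (c :: z); split; apply: Kstar_cons.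
Qed.

Fixpoint inv (s : seq nat) : nat :=
  if s is a :: s' then count (fun b => b < a) s' + inv s' else 0.

Lemma step_count n s t : step n s t -> forall p, count p s = count p t.
Proof.
elim=> [a b y _ | c s0 t0 _ IH] p /=; first by rewrite addnCA.
by rewrite IH.
Qed.

Lemma inv_step n u v : step n u v -> inv v < inv u.
Proof.
elim=> [a b y hS | c s t h IH] /=.
- have hlt := Sp_lt hS.
  have hab : (a < b) = false by apply/negbTE; rewrite -leqNgt ltnW.
  rewrite hlt hab /=; lia.
- by rewrite (step_count h); lia.
Qed.

Lemma term_all n w : Acc (fun v u => Kstep n u v) w.
Proof.
have: forall k w, inv w < k -> Acc (fun v u => Kstep n u v) w.
  elim=> [w' | k IH w' hw]; first by rewrite ltn0.
  constructor=> y /Kstep_step /inv_step h; apply: IH; lia.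
by move=> H; apply: (H (inv w).+1).
Qed.

Lemma confl n w u v : Kstar n w u -> Kstar n w v ->
  exists z, Kstar n u z /\ Kstar n v z.
Proof.
elim: (term_all n w) u v => {}w _ IH u v hu hv.
apply clos_rt_rt1n in hu; apply clos_rt_rt1n in hv.
inversion hu as [|u1 u' hwu1 hu1]; subst.
  by exists v; split; [apply clos_rt1n_rt | apply: rt_refl].
inversion hv as [|v1 v' hwv1 hv1]; subst.
  by exists u; split; [apply: rt_refl | apply: rt_trans (rt_step _ _ _ _ hwu1) _; apply clos_rt1n_rt].
apply clos_rt1n_rt in hu1; apply clos_rt1n_rt in hv1.
have [z [hz1 hz2]] := lc hwu1 hwv1.
have [z1 [h1 h2]] := IH _ hwu1 _ _ hu1 hz1.
have [z2 [h3 h4]] := IH _ hwv1 _ _ (rt_trans _ _ _ _ _ hz2 h2) hv1.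
by exists z2; split=> //; apply: rt_trans h1 h3.
Qed.

Lemma CR n u v : Kconv n u v -> exists z, Kstar n u z /\ Kstar n v z.
Proof.
move=> H; induction H.
- by exists y; split; [apply: rt_step | apply: rt_refl].
- by exists x; split; apply: rt_refl.
- by case: IHclos_refl_sym_trans => z [h1 h2]; exists z.
- case: IHclos_refl_sym_trans1 => z1 [h1 h2].
  case: IHclos_refl_sym_trans2 => z2 [h3 h4].
  have [z0 [h5 h6]] := confl h2 h3.
  by exists z0; split; [apply: rt_trans h1 h5 | apply: rt_trans h4 h6].
Qed.

Lemma irr_star n u z : irreducible n u -> Kstar n u z -> z = u.
Proof.
move=> hi h; apply clos_rt_rt1n in h; inversion h; subst => //.
by case: (hi y).
Qed.

Lemma star_conv n u v : Kstar n u v -> Kconv n u v.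
Proof.
move=> H; induction H.
- exact: rst_step.
- exact: rst_refl.
- exact: rst_trans IHclos_refl_trans1 IHclos_refl_trans2.
Qed.

Lemma step_word n u v : step n u v -> is_word n u -> is_word n v.
Proof.
elim=> [a b y _ | c s t _ IH]; rewrite /is_word /=.
- by case/and3P=> -> -> ->.
- by case/andP=> -> /IH.
Qed.

Lemma star_word n u v : Kstar n u v -> is_word n u -> is_word n v.
Proof.
move=> H; induction H => //.
- by apply: step_word; apply: Kstep_step.
- by move=> h; apply: IHclos_refl_trans2; apply: IHclos_refl_trans1.
Qed.

Lemma nf_exists n w : exists w', Kstar n w w' /\ irreducible n w'.
Proof.
elim: (term_all n w) => {}w _ IH.
case: (classic (exists v, Kstep n w v)) => [[v hv] | hno].
- have [w' [h1 h2]] := IH _ hv.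
  by exists w'; split=> //; apply: rt_trans (rt_step _ _ _ _ hv) h1.
- exists w; split; first exact: rt_refl.
  by move=> v hv; apply: hno; exists v.
Qed.

Unset Implicit Arguments.
Theorem lemma1 (n : nat) (hn : 3 <= n) :
  complete n /\
  (forall w, is_word n w ->
     exists w', [/\ is_word n w', irreducible n w', Kconv n w w' &
       forall w'', is_word n w'' -> irreducible n w'' -> Kconv n w w'' ->
         w'' = w']).
Proof.
split.
  split; first by move=> w _; apply: term_all.
  by move=> w u v _ h1 h2; apply: lc h1 h2.
move=> w hw.
have [w' [hs hirr]] := nf_exists n w.
exists w'; split=> //.
- exact: star_word hs hw.
- exact: star_conv.
- move=> w'' _ hirr2 hc.
  have [z [h1 h2]] := CR (rst_trans _ _ _ _ _ (rst_sym _ _ _ _ (star_conv hs)) hc).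
  by rewrite -(irr_star hirr2 h2) (irr_star hirr h1).
Qed.
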